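(* Let $k$ be a positive integer and let $p(k)$ be the smallest prime strictly larger than $k$. Suppose $p(k)=k+3$ and $p(k)\equiv 11 \pmod{12}$. Then $\omega(\mathcal F_{\leqslant k})=\chi(\mathcal F_{\leqslant k})=1+p(k)$.
   Context: The vertex set $V$ consists of all reduced fractions $p/q$ with $p,q\in\mathbb Z$, $\gcd(p,q)=1$, together with $1/0$; here $p/q$ and $(-p)/(-q)$ denote the same vertex. For vertices define $d(p/q,a/b)=|pb-qa|$ (which is $\ge1$ for distinct vertices). The graph $\mathcal F_{\leqslant k}$ has vertex set $V$, with an edge between distinct vertices $p/q$ and $a/b$ exactly when $d(p/q,a/b)\le k$. $\omega$ and $\chi$ denote clique number and chromatic number. *)

(* Defs.v *)
From mathcomp Require Import all_boot all_order all_algebra.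
Set Implicit Arguments. Unset Strict Implicit. Unset Printing Implicit Defensive.
Import Order.TTheory GRing.Theory Num.Theory.
Local Open Scope ring_scope.

(* A vertex p/q is stored by its canonical representative (p,q) with
   gcd(p,q)=1 and either q>0, or q=0 and p=1 (the vertex 1/0).  This
   identifies p/q with (-p)/(-q). *)
Definition canon (x : int * int) : bool :=
  coprimez x.1 x.2 && ((0 < x.2) || ((x.2 == 0) && (x.1 == 1))).

Definition vert := {x : int * int | canon x}.

Definition num (v : vert) : int := (sval v).1.
Definition den (v : vert) : int := (sval v).2.

Definition dist (u v : vert) : nat := absz (num u * den v - den u * num v)%R.

Definition adjF (k : nat) (u v : vert) : bool := (u != v) && (dist u v <= k)%N.

Definition is_clique (k : nat) (s : seq vert) : Prop :=
  uniq s /\ forall u v, u \in s -> v \in s -> u != v -> adjF k u v.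

Definition clique_number_is (k n : nat) : Prop :=
  (exists s, is_clique k s /\ size s = n) /\
  (forall s, is_clique k s -> (size s <= n)%N).

Definition proper_coloring (k m : nat) (c : vert -> 'I_m) : Prop :=
  forall u v, adjF k u v -> c u != c v.

Definition chromatic_number_is (k n : nat) : Prop :=
  (exists c : vert -> 'I_n, proper_coloring k c) /\
  (forall m (c : vert -> 'I_m), proper_coloring k c -> (n <= m)%N).

Definition next_prime (k p : nat) : Prop :=
  [/\ prime p, (k < p)%N & forall m, (k < m)%N -> (m < p)%N -> ~~ prime m].

(* Main.v *)
Require Import Defs.
From mathcomp Require Import all_boot all_order all_algebra.
From mathcomp Require Import zify.
Import Order.TTheory GRing.Theory Num.Theory.
Local Open Scope ring_scope.

Lemma canon_eq (a b c d : int) : canon (a, b) -> canon (c, d) ->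
  (a * d = b * c)%R -> (a, b) = (c, d).
Proof.
rewrite /canon /= => /andP[cab Hb] /andP[ccd Hd] E.
case/orP: Hb => [b0|/andP[/eqP b0 /eqP a1]].
  case/orP: Hd => [d0|/andP[/eqP d0 /eqP c1]]; last first.
    subst; move: E; rewrite mulr0 mulr1 => E.
    by move: b0; rewrite -E ltxx.
  have bd : (b %| d)%Z.
    have cba : coprimez b a by rewrite coprimez_sym.
    by rewrite -(Gauss_dvdzl d cba) mulrC E; apply/dvdz_mulr/dvdzz.
  have db : (d %| b)%Z.
    have cdc : coprimez d c by rewrite coprimez_sym.
    by rewrite -(Gauss_dvdzl b cdc) -E; apply/dvdz_mull/dvdzz.
  have ebd : b = d.
    move: bd db; rewrite /dvdz => bd db.
    have /eqP : (`|b| == `|d|)%N by rewrite eqn_dvd; apply/andP; split.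
    move: b0 d0; lia.
  subst d; congr pair.
  by apply: (mulIf (lt0r_neq0 b0)); rewrite E mulrC.
subst; case/orP: Hd => [d0|/andP[/eqP d0 /eqP c1]]; last by subst.
by move: E; rewrite mul1r mul0r => E; move: d0; rewrite E.
Qed.

Lemma Fp_int0 p (pp : prime p) (z : int) : (z%:~R : 'F_p) = 0 -> (p %| `|z|)%N.
Proof.
have ch := pchar_Fp pp.
case: z => n /=.
  by move=> /eqP; rewrite -(dvdn_pcharf ch).
rewrite NegzE mulrNz => /eqP; rewrite oppr_eq0 -(dvdn_pcharf ch) => H; exact: H.
Qed.

Lemma dist_neq0 (u v : vert) : u != v -> (0 < dist u v)%N.
Proof.
move=> neq; rewrite lt0n; apply/negP => /eqP d0; case/negP: neq.
apply/eqP/val_inj; case: u v d0 => [[a b] Hu] [[c d] Hv] /= d0.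
apply: canon_eq => //; move: d0; rewrite /dist /num /den /= => /eqP.
by rewrite absz_eq0 subr_eq0 => /eqP.
Qed.

Definition col p (v : vert) : 'I_p.+1 :=
  if ((den v)%:~R : 'F_p) == 0 then ord_max
  else inord (nat_of_ord (((num v)%:~R : 'F_p) / (den v)%:~R)).

Lemma col_proper k p : prime p -> (k < p)%N -> proper_coloring k (col p).
Proof.
move=> pp kp u v /andP[neq dk]; apply/negP => /eqP E.
suff : ((num u * den v - den u * num v)%:~R : 'F_p) = 0.
  move/(@Fp_int0 p pp) => /dvdn_leq => /(_ (dist_neq0 _ _ neq)).
  rewrite -/(dist u v); move: dk kp; lia.
have ltp (x : 'F_p) : (nat_of_ord x < p)%N by have := ltn_ord x; have := Fp_cast pp; lia.
rewrite rmorphB !rmorphM /=.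
move: E; rewrite /col.
set xu := (num u)%:~R : 'F_p; set yu := (den u)%:~R : 'F_p.
set xv := (num v)%:~R : 'F_p; set yv := (den v)%:~R : 'F_p.
case: eqP => [->|/eqP yu0]; case: eqP => [->|/eqP yv0] //.
- by rewrite !mulr0 mul0r subrr.
- move/(congr1 (@nat_of_ord p.+1)); rewrite inordK; last by apply: leqW; apply: ltp.
  by move=> h; have := ltp (xv / yv); rewrite -h /= ltnn.
- move/(congr1 (@nat_of_ord p.+1)); rewrite inordK; last by apply: leqW; apply: ltp.
  by move=> h; have := ltp (xu / yu); rewrite h /= ltnn.
move/(congr1 (@nat_of_ord p.+1)); rewrite !inordK; try by apply: leqW; apply: ltp.
move/ord_inj => /(congr1 (fun w => w * yu * yv)).
rewrite mulfVK // -(mulrA _ yu) (mulrC yu) mulrA mulfVK // => ->.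
by rewrite (mulrC xv) subrr.
Qed.

Lemma clique_le k m (c : vert -> 'I_m) s :
  proper_coloring k c -> is_clique k s -> (size s <= m)%N.
Proof.
move=> pc [us adj].
have inj : {in s &, injective c}.
  move=> u v us' vs E; apply/eqP/negPn/negP => neq.
  by move: (pc _ _ (adj _ _ us' vs neq)); rewrite E eqxx.
have U : uniq (map c s) by rewrite (map_inj_in_uniq inj).
rewrite -(size_map c); move/card_uniqP: U => <-.
by apply: leq_trans (max_card _) _; rewrite card_ord.
Qed.

Definition gpt (t n : nat) : nat * nat :=
  if n == 0%N then (1%N, 0%N)
  else if (n < 7 * t + 7)%N then ((n - 1)%N, 1%N)
  else if (n < 10 * t + 10)%N then ((4 * t + 3 + 2 * (n - (7 * t + 7)))%N, 2%N)
  else if (n < 11 * t + 11)%N then ((9 * t + 7 + 3 * (n - (10 * t + 10)))%N, 3%N)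
  else ((9 * t + 8 + 3 * (n - (11 * t + 11)))%N, 3%N).

Lemma gpt_inj t n n' : (n < 12 * t + 12)%N -> (n' < 12 * t + 12)%N ->
  gpt t n = gpt t n' -> n = n'.
Proof.
rewrite /gpt => hn hn'.
by repeat case: ifP; move=> *; repeat match goal with H : (_, _) = (_, _) |- _ => case: H end; lia.
Qed.

Lemma gpt_dist t n n' : (n < 12 * t + 12)%N -> (n' < 12 * t + 12)%N ->
  (absz ((gpt t n).1%:Z * (gpt t n').2%:Z - (gpt t n).2%:Z * (gpt t n').1%:Z)%R <= 12 * t + 8)%N.
Proof.
rewrite /gpt => hn hn'.
by repeat case: ifP => /=; move=> *; lia.
Qed.

Lemma coprimezP (a b : nat) : coprimez a%:Z b%:Z = coprime a b.
Proof. by []. Qed.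

Lemma cop2 a : (a %% 2 = 1)%N -> coprime a 2.
Proof. by rewrite -coprime_modl => ->. Qed.

Lemma cop3 a : (a %% 3 = 1)%N \/ (a %% 3 = 2)%N -> coprime a 3.
Proof. by rewrite -coprime_modl => -[->|->]. Qed.

Lemma gpt_canon t n : (n < 12 * t + 12)%N -> canon ((gpt t n).1%:Z, (gpt t n).2%:Z).
Proof.
rewrite /gpt /canon => hn.
repeat case: ifP => /=; move=> *; rewrite ?andbT //; rewrite coprimezP;
  first [ by rewrite coprimen1 | by apply: cop2; lia | by apply: cop3; lia ].
Qed.

Definition v10 : vert := exist _ (1%Z, 0%Z) isT.
Definition mkv (x : int * int) : vert := insubd v10 x.
Definition G t n : int * int := ((gpt t n).1%:Z, (gpt t n).2%:Z).
Definition S t : seq vert := map (fun n => mkv (G t n)) (iota 0 (12 * t + 12)).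

Lemma valG t n : (n < 12 * t + 12)%N -> sval (mkv (G t n)) = G t n.
Proof. by move=> hn; rewrite /mkv; apply: (insubdK v10); apply: gpt_canon. Qed.

Lemma S_clique t : is_clique (12 * t + 8) (S t) /\ size (S t) = (12 * t + 12)%N.
Proof.
split; last by rewrite size_map size_iota.
split.
  rewrite map_inj_in_uniq ?iota_uniq // => n n'; rewrite !mem_iota /= !add0n => hn hn' E.
  have := valG _ _ hn; rewrite E valG // /G => -[e1 e2].
  by apply: (gpt_inj _ _ _ hn hn'); rewrite [gpt t n]surjective_pairing [gpt t n']surjective_pairing e1 e2.
move=> u v /mapP[n]; rewrite mem_iota /= add0n => hn -> /mapP[n'];
  rewrite mem_iota /= add0n => hn' -> neq.
rewrite /adjF neq /= /dist /num /den !valG //.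
exact: gpt_dist.
Qed.

Local Close Scope ring_scope.

Theorem theorem1p3 (k p : nat) :
  (0 < k)%N -> next_prime k p -> p = (k + 3)%N -> p %% 12 = 11 ->
  clique_number_is k p.+1 /\ chromatic_number_is k p.+1.
Proof.
move=> k0 [pp kp nxt] pk p11.
set t := p %/ 12.
have ep : p = (12 * t + 11)%N by rewrite {1}(divn_eq p 12) p11 /t; lia.
have ek : k = (12 * t + 8)%N by lia.
clearbody t.
have [cl sz] := S_clique t.
have cp := col_proper _ _ pp kp.
split; split.
- exists (S t); rewrite ek; split => //; rewrite sz; lia.
- by move=> s cs; apply: clique_le cp cs.
- by exists (col p).
- move=> m c pc; rewrite -ek in cl.
  by have := clique_le _ _ _ _ pc cl; rewrite sz ep; lia.
Qed.
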